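(* Let $M$ be a REP-expanded cost sharing mechanism for a GND instance. Then for every $\varrho \ge 1$, the GND game induced by $M$ is $\big(\gamma_\alpha + \lambda_\alpha \varrho^{\max_j \alpha_j},\ 1/(2\varrho)\big)$-smooth, where $$\gamma_\alpha = \max_{e\in E}\min_{j\in[q]}\Big(\frac{1}{\alpha_j-1}\cdot\frac{\sigma_e}{\xi_{e,j}}\Big)^{1/\alpha_j}$$ and $\lambda_\alpha>0$ is a constant depending only on $q$, $\alpha_1,\dots,\alpha_q$ (through the REP-expansion constants $K_j, z_{k,j}$ of $M$, which depend only on the $\alpha_j$).
   Context: GND instance: finite resource set $E$; requests (players) $i \in [N]$, each with a reply (strategy) collection $P_i \subseteq 2^E$ and a weight vector $w_i \in \mathbb{Z}_{\geq 1}^E$; constants $q \in \mathbb{Z}_{\ge1}$, $\alpha_1,\dots,\alpha_q > 1$; for each $e$, $\sigma_e \geq 0$ and $\xi_{e,j} \geq 0$ (at least one $\xi_{e,j}>0$), and cost function $F_e(0)=0$, $F_e(l)=\sigma_e+\sum_j \xi_{e,j} l^{\alpha_j}$ for $l>0$. Strategy profile $p\in P=P_1\times\dots\times P_N$; load $l_e^p=\sum_{i: e\in p_i} w_i(e)$; total cost $C(p)=\sum_e F_e(l_e^p)$. Terms with $\xi_{e,j}=0$ in $\min_j$ are interpreted as $+\infty$. A cost sharing mechanism (CSM) $M=\{f_{i,e}\}$ assigns cost shares $f_{i,e}(p)\ge 0$ with $\sum_i f_{i,e}(p)=F_e(l_e^p)$; it is separable and uniform: $f_{i,e}(p)=0$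 if $e\notin p_i$, and $f_{i,e}(p)$ depends only on $w_i(e)$ and the multiset of weights of the other players using $e$. Individual cost $C_i(p)=\sum_e f_{i,e}(p)$. $M$ is REP-expanded if for each $j\in[q]$ there are a nonnegative integer $K_j$ and nonnegative constants $x_{k,j}\in[0,\alpha_j-1]$, $y_{k,j}\in[1,\alpha_j]$, $z_{k,j}$ ($k\in[K_j]$), depending only on $\alpha_j$, with $x_{k,j}+y_{k,j}=\alpha_j$, such that for every profile $p$, player $i$ and resource $e\in p_i$: $$f_{i,e}(p)\le \sigma_e+\sum_{j\in[q]}\xi_{e,j}\sum_{k=1}^{K_j} z_{k,j}\,(l_e^p-w_i(e))^{x_{k,j}}(w_i(e))^{y_{k,j}}.$$ The game is $(\lambda,\mu)$-smooth ($\lambda>0$, $0<\mu<1$) if $\sum_i C_i(p'_i,p_{-i})\le\lambda C(p')+\mu C(p)$ for all $p,p'\in P$, where $(p'_i,p_{-i})$ is $p$ with the $i$-th coordinate replaced by $p'_i$. *)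

(* Defs.v *)
From HB Require Import structures.
From mathcomp Require Import all_boot all_order all_algebra.
From mathcomp Require Import all_classical all_reals all_analysis.
Set Implicit Arguments. Unset Strict Implicit. Unset Printing Implicit Defensive.
Import Order.TTheory GRing.Theory Num.Theory.
Local Open Scope ring_scope.

Section GND.
Variables (R : realType) (E : finType) (N : nat).

Definition profile := {ffun 'I_N -> {set E}}.

Definition valid (Pset : 'I_N -> {set {set E}}) (p : profile) : Prop :=
  forall i, p i \in Pset i.

Definition upd (p p' : profile) (i : 'I_N) : profile :=
  [ffun j => if j == i then p' j else p j].

Definition load (w : 'I_N -> E -> nat) (p : profile) (e : E) : nat :=
  (\sum_(i < N | e \in p i) w i e)%N.

Definition Fcost (q : nat) (alpha : 'I_q -> R) (sigma : E -> R)
  (xi : E -> 'I_q -> R) (e : E) (l : nat) : R :=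
  if l == 0%N then 0 else sigma e + \sum_(j < q) xi e j * (l%:R `^ alpha j).

Definition total_cost (q : nat) (alpha : 'I_q -> R) (sigma : E -> R) (xi : E -> 'I_q -> R) (w : 'I_N -> E -> nat) (p : profile) : R :=
  \sum_(e : E) Fcost alpha sigma xi e (load w p e).

(* a CSM: f i e p = cost share of player i on resource e at profile p *)
Definition indiv_cost (f : 'I_N -> E -> profile -> R) (p : profile) (i : 'I_N) : R :=
  \sum_(e : E) f i e p.

Definition others_weights (w : 'I_N -> E -> nat) (p : profile) (i : 'I_N) (e : E)
  : seq nat := [seq w j e | j <- enum 'I_N & (j != i) && (e \in p j)].

Definition is_CSM (q : nat) (alpha : 'I_q -> R) (sigma : E -> R) (xi : E -> 'I_q -> R) (Pset : 'I_N -> {set {set E}})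
  (w : 'I_N -> E -> nat) (f : 'I_N -> E -> profile -> R) : Prop :=
  [/\ (forall p i e, valid Pset p -> 0 <= f i e p),
      (forall p e, valid Pset p ->
         \sum_(i < N) f i e p = Fcost alpha sigma xi e (load w p e)),
      (forall p i e, valid Pset p -> e \notin p i -> f i e p = 0) &
      (forall p p' i i' e, valid Pset p -> valid Pset p' ->
         e \in p i -> e \in p' i' -> w i e = w i' e ->
         perm_eq (others_weights w p i e) (others_weights w p' i' e) ->
         f i e p = f i' e p')].

Definition REP_bound q (sigma : E -> R) (xi : E -> 'I_q -> R)
  (K : 'I_q -> nat) (x y z : forall j : 'I_q, 'I_(K j) -> R)
  (Pset : 'I_N -> {set {set E}}) (w : 'I_N -> E -> nat)
  (f : 'I_N -> E -> profile -> R) : Prop :=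
  forall p i e, valid Pset p -> e \in p i ->
    f i e p <= sigma e + \sum_(j < q) xi e j *
      \sum_(k < K j) z j k * (((load w p e - w i e)%N)%:R `^ x j k)
                           * ((w i e)%:R `^ y j k).

Definition smooth (q : nat) (alpha : 'I_q -> R) (sigma : E -> R) (xi : E -> 'I_q -> R) (Pset : 'I_N -> {set {set E}})
  (w : 'I_N -> E -> nat) (f : 'I_N -> E -> profile -> R) (lam mu : R) : Prop :=
  forall p p', valid Pset p -> valid Pset p' ->
    \sum_(i < N) indiv_cost f (upd p p' i) i
      <= lam * total_cost alpha sigma xi w p' + mu * total_cost alpha sigma xi w p.

End GND.

(* gamma_alpha = max_e min_{j : xi_{e,j} > 0} ((1/(alpha_j-1)) sigma_e/xi_{e,j})^(1/alpha_j);
   terms with xi_{e,j} = 0 are +oo (they are excluded from the min);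
   the max over an empty resource set is taken to be 0. *)
Definition gamma_alpha (R : realType) (E : finType) (q : nat) (alpha : 'I_q -> R)
  (sigma : E -> R) (xi : E -> 'I_q -> R) : R :=
  fine (\big[Order.max/0%E]_(e : E)
          \big[Order.min/+oo%E]_(j < q | xi e j != 0)
             (((alpha j - 1)^-1 * (sigma e / xi e j)) `^ (alpha j)^-1)%:E).

(* max_j alpha_j (alpha_j > 1 > 0, so seeding with 0 is harmless) *)
Definition max_alpha (R : realType) (q : nat) (alpha : 'I_q -> R) : R :=
  \big[Num.max/0]_(j < q) alpha j.

(* Main.v *)
Require Import Defs.
From HB Require Import structures.
From mathcomp Require Import all_boot all_order all_algebra.
From mathcomp Require Import all_classical all_reals all_analysis.
From mathcomp Require Import ring lra zify.
Import Order.TTheory GRing.Theory Num.Theory.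
Local Open Scope ring_scope.

Set Implicit Arguments. Unset Strict Implicit.

Section Helpers.
Variable R : realType.

Lemma ln_lb (u : R) : 0 < u -> 1 - u^-1 <= ln u.
Proof.
move=> u0.
have h : -1 < u^-1 - 1 by rewrite ltrBrDr addrC subrr invr_gt0.
have := le_ln1Dx h. rewrite addrC subrK lnV ?posrE // => H.
by rewrite -lerN2 opprB.
Qed.

Lemma key_u (u a : R) : 0 <= u -> 1 < a -> u <= 1 + u `^ a / (a - 1).
Proof.
move=> u0 a1.
have a10 : 0 < a - 1 by rewrite subr_gt0.
case: (lerP u 1) => hu.
  apply: (le_trans hu); rewrite lerDl divr_ge0 ?powR_ge0 //; exact: ltW.
have upos : 0 < u by apply: lt_trans hu.
have e1 : u `^ a = u * u `^ (a - 1) by rewrite mulr_powRB1 // ?(ltW upos) // (lt_trans ltr01).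
have e2 : u `^ (a - 1) = expR ((a - 1) * ln u) by rewrite /powR gt_eqF.
have h1 : 1 + (a - 1) * ln u <= u `^ (a - 1) by rewrite e2 expR_ge1Dx.
have h2 : (a - 1) * (1 - u^-1) <= (a - 1) * ln u by rewrite ler_pM2l // ln_lb.
have h3 : u + (a - 1) * (u - 1) <= u `^ a.
  rewrite e1; have := ler_pM2l upos; move=> H.
  have HH : u * (1 + (a - 1) * (1 - u^-1)) <= u * u `^ (a - 1).
    by rewrite H; apply: le_trans h1; rewrite lerD2l.
  apply: le_trans HH; rewrite le_eqVlt; apply/orP; left; apply/eqP.
  by field; rewrite gt_eqF.
rewrite -lerBlDl ler_pdivlMr //.
apply: le_trans h3; rewrite mulrC lerDr; exact: ltW.
Qed.


Lemma gam_ineq (s xi a l : R) : 0 <= s -> 0 < xi -> 1 < a -> 0 <= l ->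
  s * l <= ((a - 1)^-1 * (s / xi)) `^ a^-1 * (s + xi * l `^ a).
Proof.
move=> s0 xi0 a1 l0.
have a0 : 0 < a by apply: lt_trans a1.
have a10 : 0 < a - 1 by rewrite subr_gt0.
set v := (a - 1)^-1 * (s / xi).
set c := v `^ a^-1.
have c0 : 0 <= c by exact: powR_ge0.
case: (eqVneq s 0) => [->|sn0].
  by rewrite mul0r mulr_ge0 // addr_ge0 // mulr_ge0 ?powR_ge0 // ltW.
have spos : 0 < s by rewrite lt_def sn0 s0.
have v0 : 0 < v by rewrite /v mulr_gt0 ?invr_gt0 ?divr_gt0.
have cpos : 0 < c by rewrite /c powR_gt0.
have ca : c `^ a = v by rewrite /c -powRrM mulVf ?gt_eqF // powRr1 // ltW.
set u := l / c.
have u0 : 0 <= u by rewrite /u divr_ge0.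
have lcu : l = c * u by rewrite /u mulrCA mulfV ?gt_eqF // mulr1.
rewrite lcu powRM // ca /v.
have H := @key_u u a u0 a1.
have E1 : c * (s + xi * ((a - 1)^-1 * (s / xi) * u `^ a))
   = (s * c) * (1 + u `^ a / (a - 1)).
  by field; rewrite !gt_eqF.
by rewrite E1 mulrA ler_pM2l // mulr_gt0.
Qed.

Lemma young (L l M a x y : R) : 0 <= L -> 0 <= l -> 1 <= M ->
  0 <= x -> x <= a - 1 -> 1 <= y -> x + y = a ->
  L `^ x * l `^ y <= M `^ (a - 1) * l `^ a + L `^ a / M.
Proof.
move=> L0 l0 M1 x0 xa y1 xya.
have M0 : 0 < M by apply: lt_le_trans M1.
have a0 : 0 < a by rewrite -xya; apply: lt_le_trans (ltr01) _; rewrite -[1]add0r lerD.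
case: (lerP L (M * l)) => h.
  apply: le_trans (_ : M `^ (a - 1) * l `^ a <= _); last first.
    by rewrite lerDl divr_ge0 ?powR_ge0 // ltW.
  have -> : l `^ a = l `^ x * l `^ y by rewrite -xya powRD // xya (gt_eqF a0).
  rewrite mulrA ler_wpM2r ?powR_ge0 //.
  apply: le_trans (_ : (M * l) `^ x <= _).
    by apply: ge0_ler_powR => //; rewrite nnegrE // mulr_ge0 // ltW.
  rewrite powRM ?(ltW M0) // ler_wpM2r ?powR_ge0 //.
  by apply: ler_powR.
have Lpos : 0 < L by apply: le_lt_trans h; rewrite mulr_ge0 // ltW.
apply: le_trans (_ : L `^ a / M <= _); last by rewrite lerDr mulr_ge0 ?powR_ge0.
have hl : l <= L / M by rewrite ler_pdivlMr // mulrC ltW.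
apply: le_trans (_ : L `^ x * (L / M) `^ y <= _).
  rewrite ler_wpM2l ?powR_ge0 //; apply: ge0_ler_powR => //.
    by apply: le_trans (ltW (lt_le_trans ltr01 y1)).
  by rewrite nnegrE divr_ge0 // ltW.
rewrite powRM ?(ltW Lpos) ?invr_ge0 ?(ltW M0) //.
have -> : L `^ a = L `^ x * L `^ y by rewrite -xya powRD // xya (gt_eqF a0).
rewrite -mulrA ler_wpM2l ?powR_ge0 // ler_wpM2l ?powR_ge0 //.
apply: ge1r_powR => //; rewrite invr_gt0 M0 /= invf_le1 //.
Qed.


Lemma gamma_facts (E : finType) (q : nat) (alpha : 'I_q -> R) (sigma : E -> R)
  (xi : E -> 'I_q -> R) (e : E) :
  (forall e j, 0 <= xi e j) -> (forall e, exists j, 0 < xi e j) ->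
  exists j, 0 < xi e j /\
   ((alpha j - 1)^-1 * (sigma e / xi e j)) `^ (alpha j)^-1 <= gamma_alpha alpha sigma xi.
Proof.
move=> xi0 hex.
set g := fun e j => ((alpha j - 1)^-1 * (sigma e / xi e j)) `^ (alpha j)^-1.
have hmin : forall e, exists2 j, xi e j != 0 &
   \big[Order.min/+oo%E]_(j < q | xi e j != 0) (g e j)%:E = (g e j)%:E.
  move=> e'; have [j0 hj0] := hex e'.
  have P0 : xi e' j0 != 0 by rewrite gt_eqF.
  have [i0 Pi0 ->] := eq_bigmin j0 (fun j => xi e' j != 0) (fun j => (g e' j)%:E) P0 (fun i _ => leey _).
  by exists i0.
have [j Pj Ej] := hmin e.
exists j; split; first by rewrite lt_def Pj xi0.
have fin : (\big[Order.max/0%E]_(e : E)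
          \big[Order.min/+oo%E]_(j < q | xi e j != 0) (g e j)%:E) \is a fin_num.
  apply: (big_ind (fun v : \bar R => v \is a fin_num)) => //.
    by move=> u v hu hv; rewrite /Order.max; case: ifP.
  by move=> e' _; have [j' _ ->] := hmin e'.
rewrite /gamma_alpha -/g -lee_fin (fineK fin) -Ej.
exact: le_bigmax.
Qed.


Lemma load_upd (E : finType) (N : nat) (w : 'I_N -> E -> nat) (p p' : profile E N)
  (i : 'I_N) (e : E) : (load w (upd p p' i) e <= load w p e + w i e)%N.
Proof.
rewrite /load (big_mkcond (fun j => e \in upd p p' i j)) /=.
rewrite (big_mkcond (fun j => e \in p j)) /=.
rewrite (bigD1 i) //= [X in (_ <= X + _)%N](bigD1 i) //=.
rewrite (eq_bigr (fun j => if e \in p j then w j e else 0%N)); last first.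
  by move=> j /negbTE hj; rewrite /upd ffunE hj.
have : ((if e \in upd p p' i i then w i e else 0) <= w i e)%N by case: ifP.
move=> h; apply: leq_trans (leq_add h (leqnn _)) _.
by rewrite addnC leq_add2r leq_addl.
Qed.

Lemma wsum (E : finType) (N : nat) (w : 'I_N -> E -> nat) (p : profile E N)
  (e : E) (y : R) : 1 <= y ->
  \sum_(i < N | e \in p i) (w i e)%:R `^ y <= (load w p e)%:R `^ y.
Proof.
move=> y1; have y0 : 0 < y by apply: lt_le_trans y1.
have y10 : 0 <= y - 1 by rewrite subr_ge0.
apply: le_trans (_ : \sum_(i < N | e \in p i) (w i e)%:R * (load w p e)%:R `^ (y - 1) <= _).
  apply: ler_sum => i hi; rewrite -mulr_powRB1 // ler_wpM2l //.
  apply: ge0_ler_powR => //; rewrite ?nnegrE // ler_nat /load (bigD1 i) //=.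
  exact: leq_addr.
by rewrite -mulr_suml -natr_sum mulr_powRB1.
Qed.

Lemma sum_young (K : nat) (z x y : 'I_K -> R) (a L l rho : R) :
  0 <= L -> 0 <= l -> 1 <= rho -> (forall k, 0 <= z k) ->
  (forall k, 0 <= x k <= a - 1) -> (forall k, 1 <= y k) ->
  (forall k, x k + y k = a) ->
  \sum_(k < K) z k * L `^ x k * l `^ y k <=
   ((\sum_(k < K) z k) * (2 * (1 + \sum_(k < K) z k)) `^ (a - 1)) * rho `^ (a - 1) * l `^ a
   + (2 * rho)^-1 * L `^ a.
Proof.
move=> L0 l0 rho1 z0 hx hy hxy.
set Z := \sum_(k < K) z k.
have Z0 : 0 <= Z by apply: sumr_ge0.
have rho0 : 0 < rho by apply: lt_le_trans rho1.
set M := 2 * rho * (1 + Z).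
have M1 : 1 <= M.
  rewrite /M; nra.
apply: le_trans (_ : \sum_(k < K) z k * (M `^ (a - 1) * l `^ a + L `^ a / M) <= _).
  apply: ler_sum => k _; rewrite -mulrA ler_wpM2l //.
  by have /andP[hx1 hx2] := hx k; apply: young.
rewrite -mulr_suml -/Z mulrDr; apply: lerD.
  have hM : M `^ (a - 1) = (2 * (1 + Z)) `^ (a - 1) * rho `^ (a - 1).
    by rewrite /M mulrAC (powRM _ (x := 2 * (1 + Z))) ?(ltW rho0) ?mulr_ge0 ?addr_ge0.
  by rewrite hM le_eqVlt; apply/orP; left; apply/eqP; ring.
have M0 : 0 < M by apply: lt_le_trans M1.
rewrite (_ : Z * (L `^ a / M) = (Z / M) * L `^ a); last by rewrite mulrA mulrAC.
rewrite ler_wpM2r ?powR_ge0 // ler_pdivrMr // /M mulrA mulVf ?mul1r ?lerDr //.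
by rewrite gt_eqF // mulr_gt0.
Qed.

End Helpers.

Theorem theorem6p1 (R : realType) (q : nat) (alpha : 'I_q -> R)
  (K : 'I_q -> nat) (z : forall j : 'I_q, 'I_(K j) -> R) :
  (0 < q)%N ->
  (forall j, 1 < alpha j) ->
  (forall j k, 0 <= z j k) ->
  exists lam : R, 0 < lam /\
  forall (x y : forall j : 'I_q, 'I_(K j) -> R),
  (forall j k, 0 <= x j k <= alpha j - 1) ->
  (forall j k, 1 <= y j k <= alpha j) ->
  (forall j k, x j k + y j k = alpha j) ->
  forall (E : finType) (N : nat) (Pset : 'I_N -> {set {set E}})
         (w : 'I_N -> E -> nat) (sigma : E -> R) (xi : E -> 'I_q -> R)
         (f : 'I_N -> E -> profile E N -> R),
  (forall i e, (1 <= w i e)%N) ->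
  (forall e, 0 <= sigma e) ->
  (forall e j, 0 <= xi e j) ->
  (forall e, exists j, 0 < xi e j) ->
  is_CSM alpha sigma xi Pset w f ->
  REP_bound sigma xi x y z Pset w f ->
  forall rho : R, 1 <= rho ->
  smooth alpha sigma xi Pset w f
    (gamma_alpha alpha sigma xi + lam * rho `^ max_alpha alpha) (2 * rho)^-1.
Proof.
move=> q0 halpha hz.
set Z := fun j => \sum_(k < K j) z j k.
set C := fun j => Z j * (2 * (1 + Z j)) `^ (alpha j - 1).
set lam := 1 + \sum_(j < q) C j.
have hC : forall j, 0 <= C j.
  by move=> j; rewrite /C mulr_ge0 ?powR_ge0 // /Z sumr_ge0.
have hClam : forall j, C j <= lam.
  move=> j; apply: le_trans (_ : C j <= \sum_(j < q) C j) _.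
    by rewrite (bigD1 j) //= lerDl sumr_ge0.
  by rewrite /lam lerDr ler01.
have lam0 : 0 < lam by apply: lt_le_trans (ltr01) _; rewrite /lam lerDl sumr_ge0.
exists lam; split => //.
move=> x y hx hy hxy E N Pset w sigma xi f hw hs hxi hex [C1 C2 C3 C4] REP rho hrho.
move=> p p' vp vp'.
set A := max_alpha alpha.
set gam := gamma_alpha alpha sigma xi.
have rho0 : 0 < rho by apply: lt_le_trans hrho.
have hA : forall j, alpha j <= A.
  by move=> j; rewrite /A /max_alpha; exact: le_bigmax.
have hrA : forall j, rho `^ (alpha j - 1) <= rho `^ A.
  move=> j; apply: ler_powR => //; apply: le_trans (hA j).
  by rewrite lerBlDr lerDl ler01.
have valid_upd : forall i, valid Pset (upd p p' i).
  move=> i j; rewrite /upd ffunE; case: ifP => [/eqP->|_]; [exact: vp' | exact: vp].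
have Fge0 : forall e l, 0 <= Fcost alpha sigma xi e l.
  move=> e l; rewrite /Fcost; case: ifP => // _; rewrite addr_ge0 // sumr_ge0 // => j _.
  by rewrite mulr_ge0 // powR_ge0.
have Flow : forall e (l : nat), \sum_(j < q) xi e j * l%:R `^ alpha j <= Fcost alpha sigma xi e l.
  move=> e l; rewrite /Fcost; case: eqP => [->|_]; last by rewrite lerDr.
  rewrite big1 // => j _; rewrite ?mulr0n powR0 ?mulr0 // gt_eqF //.
  exact: lt_trans (ltr01) (halpha j).
have Fgam : forall e (l : nat), sigma e * l%:R <= gam * Fcost alpha sigma xi e l.
  move=> e l; case: (posnP l) => [->|lpos].
    by rewrite /Fcost eqxx !mulr0 ?mulr0n ?mulr0.
  have [j [xj hj]] := gamma_facts alpha sigma e hxi hex.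
  apply: le_trans (gam_ineq (hs e) xj (halpha j) (ler0n _ l)) _.
  apply: le_trans (_ : ((alpha j - 1)^-1 * (sigma e / xi e j)) `^ (alpha j)^-1
                        * Fcost alpha sigma xi e l <= _).
    rewrite ler_wpM2l ?powR_ge0 // /Fcost (negbTE (lt0n_neq0 lpos)) lerD2l.
    rewrite (bigD1 j) //= lerDl sumr_ge0 // => j' _.
    by rewrite mulr_ge0 // powR_ge0.
  by rewrite ler_wpM2r.
rewrite /indiv_cost /total_cost exchange_big /= !mulr_sumr -big_split /=.
apply: ler_sum => e _.
set l' := load w p' e; set L := load w p e.
apply: le_trans (_ : sigma e * l'%:R + \sum_(j < q) xi e j *
   \sum_(k < K j) z j k * L%:R `^ x j k * l'%:R `^ y j k <= _).
  apply: le_trans (_ : \sum_(i < N) (if e \in p' i then sigma e + \sum_(j < q) xi e j *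
     \sum_(k < K j) z j k * L%:R `^ x j k * (w i e)%:R `^ y j k else 0) <= _).
    apply: ler_sum => i _; case: ifP => hin.
      have hu : e \in upd p p' i i by rewrite /upd ffunE eqxx.
      apply: le_trans (REP _ _ _ (valid_upd i) hu) _.
      rewrite lerD2l; apply: ler_sum => j _; rewrite ler_wpM2l //; apply: ler_sum => k _.
      rewrite ler_wpM2r ?powR_ge0 // ler_wpM2l //; apply: ge0_ler_powR;
        [by case/andP: (hx j k) | by rewrite nnegrE | by rewrite nnegrE | ].
      by rewrite ler_nat leq_subLR addnC; exact: load_upd.
    by rewrite C3 // /upd ffunE eqxx hin.
  rewrite -big_mkcond /= big_split /=; apply: lerD.
    apply: le_trans (_ : \sum_(i < N | e \in p' i) sigma e * (w i e)%:R <= _).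
      by apply: ler_sum => i _; apply: ler_peMr => //; rewrite ler1n hw.
    by rewrite -mulr_sumr -natr_sum.
  rewrite exchange_big /=; apply: ler_sum => j _; rewrite -mulr_sumr ler_wpM2l //.
  rewrite exchange_big /=; apply: ler_sum => k _; rewrite -mulr_sumr ler_wpM2l ?mulr_ge0 ?powR_ge0 //.
  by apply: wsum; case/andP: (hy j k).
apply: le_trans (_ : sigma e * l'%:R
   + lam * rho `^ A * (\sum_(j < q) xi e j * l'%:R `^ alpha j)
   + (2 * rho)^-1 * (\sum_(j < q) xi e j * L%:R `^ alpha j) <= _).
  rewrite -addrA lerD2l !mulr_sumr -big_split; apply: ler_sum => j _.
  apply: le_trans (_ : xi e j * (C j * rho `^ (alpha j - 1) * l'%:R `^ alpha j
                          + (2 * rho)^-1 * L%:R `^ alpha j) <= _).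
    rewrite ler_wpM2l //; apply: sum_young;
      [exact: ler0n | exact: ler0n | done | exact: hz | exact: hx
      | by move=> k; case/andP: (hy j k) | exact: hxy].
  rewrite mulrDr; apply: lerD; last by rewrite mulrCA.
  rewrite [X in _ <= X]mulrCA ler_wpM2l // ler_wpM2r ?powR_ge0 // ler_pM ?powR_ge0 //.
rewrite (mulrDl gam); apply: lerD; [apply: lerD|].
- exact: Fgam.
- rewrite ler_wpM2l ?mulr_ge0 ?powR_ge0 ?(ltW lam0) //; exact: Flow.
- rewrite ler_wpM2l ?invr_ge0 ?mulr_ge0 ?(ltW rho0) //; exact: Flow.
Qed.
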